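(* Let $L$ be a torsion-free abelian group of rank 1, $L^\vee=\operatorname{Hom}(L,\mathbf{Q}/\mathbf{Z})$ and $\operatorname{Tor}(L^\vee)$ its torsion subgroup. Let $S$ be the set of primes $p$ for which $L$ is $p$-divisible, and $\mu_{(S)}=\bigoplus_{p\notin S}\mathbf{Q}_p/\mathbf{Z}_p\subset\mathbf{Q}/\mathbf{Z}$ (the roots of unity of order prime to every $p\in S$). For $\xi\in\operatorname{Hom}(L,\widehat{\mathbf{Z}})$ define $\xi^\vee:\mathbf{Q}/\mathbf{Z}\to L^\vee$ by $\xi^\vee(r)(x)=r\cdot\xi(x)\in\mathbf{Q}/\mathbf{Z}$ (using the natural $\widehat{\mathbf{Z}}$-module structure of $\mathbf{Q}/\mathbf{Z}$; this is the Pontryagin dual of $\xi$). Then the following are equivalent: (1) $\xi$ generates the $\widehat{\mathbf{Z}}$-module $\operatorname{Hom}(L,\widehat{\mathbf{Z}})$; (2) the restriction of $\xi^\vee$ to $\mu_{(S)}$ is an isomorphism $\mu_{(S)}\xrightarrow{\sim}\operatorname{Tor}(L^\vee)$. *)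

(* Defs.v *)
From HB Require Import structures.
From mathcomp Require Import all_boot all_order all_algebra.
Set Implicit Arguments. Unset Strict Implicit. Unset Printing Implicit Defensive.
Import Order.TTheory GRing.Theory Num.Theory.
Local Open Scope ring_scope.

Definition torsion_free (L : zmodType) : Prop :=
  forall (x : L) (n : nat), (0 < n)%N -> x *+ n = 0 -> x = 0.

Definition rank_one (L : zmodType) : Prop :=
  (exists x : L, x != 0) /\
  forall x y : L, exists m n : int, (m != 0) || (n != 0) /\ x *~ m = y *~ n.

Definition p_divisible (L : zmodType) (p : nat) : Prop :=
  forall x : L, exists y : L, y *+ p = x.

(* ---------- Q/Z, represented by rationals modulo Z ---------- *)

Definition isint (r : rat) : bool := denq r == 1.

(* r (mod Z) lies in mu_(S): its order (= denominator of r) is prime to every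
   prime p in S = { p | L is p-divisible } *)
Definition in_muS (L : zmodType) (r : rat) : Prop :=
  forall p : nat, prime p -> p_divisible L p -> ~~ (p %| `|denq r|)%N.

(* ---------- Zhat = lim Z/nZ, as compatible families (c n mod n)_{n>0} ---------- *)

Definition is_zhat (c : nat -> int) : Prop :=
  forall m n : nat, (0 < m)%N -> (0 < n)%N -> (m %| n)%N ->
    (c n == c m %[mod m])%Z.

Definition zhat_eq (c d : nat -> int) : Prop :=
  forall n : nat, (0 < n)%N -> (c n == d n %[mod n])%Z.

Definition zhat_add (c d : nat -> int) : nat -> int := fun n => c n + d n.
Definition zhat_mul (c d : nat -> int) : nat -> int := fun n => c n * d n.

Definition is_hom_zhat (L : zmodType) (xi : L -> nat -> int) : Prop :=
  (forall x, is_zhat (xi x)) /\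
  (forall x y, zhat_eq (xi (x + y)) (zhat_add (xi x) (xi y))).

Definition generates_hom (L : zmodType) (xi : L -> nat -> int) : Prop :=
  forall eta : L -> nat -> int, is_hom_zhat eta ->
    exists c, is_zhat c /\ forall x, zhat_eq (eta x) (zhat_mul c (xi x)).

(* natural Zhat-module structure on Q/Z : c . (a/n) = (c_n a)/n  (mod Z) *)
Definition qz_act (c : nat -> int) (r : rat) : rat :=
  ((numq r * c `|denq r|%N)%:~R) / (denq r)%:~R.

(* ---------- L^vee = Hom(L, Q/Z), functions L -> Q taken mod Z ---------- *)

Definition is_dual (L : zmodType) (f : L -> rat) : Prop :=
  forall x y : L, isint (f (x + y) - f x - f y).

Definition dual_eq (L : zmodType) (f g : L -> rat) : Prop :=
  forall x : L, isint (f x - g x).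

Definition in_tor_dual (L : zmodType) (f : L -> rat) : Prop :=
  is_dual f /\ exists n : nat, (0 < n)%N /\ forall x : L, isint (f x *+ n).

Definition xi_dual (L : zmodType) (xi : L -> nat -> int) (r : rat) : L -> rat :=
  fun x => qz_act (xi x) r.

Definition dual_restr_iso (L : zmodType) (xi : L -> nat -> int) : Prop :=
  [/\
      (forall r, in_muS L r -> in_tor_dual (xi_dual xi r)),
      (forall r s, in_muS L r -> in_muS L s ->
         dual_eq (xi_dual xi (r + s)) (fun x => xi_dual xi r x + xi_dual xi s x)),
      (forall r s, in_muS L r -> in_muS L s ->
         dual_eq (xi_dual xi r) (xi_dual xi s) -> isint (r - s)) &
      (forall f, in_tor_dual f -> exists r, in_muS L r /\ dual_eq f (xi_dual xi r))].

(* Main.v *)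
Require Import Defs.
From HB Require Import structures.
From mathcomp Require Import all_boot all_order all_algebra ring.
From Stdlib Require Import Classical ClassicalEpsilon.
Set Implicit Arguments. Unset Strict Implicit. Unset Printing Implicit Defensive.
Import Order.TTheory GRing.Theory Num.Theory.
Local Open Scope ring_scope.

Lemma isintP (r : rat) : isint r <-> exists z : int, r = z%:~R.
Proof.
rewrite /isint; split.
  move=> /eqP hd; exists (numq r); by rewrite numqE hd mulr1.
by move=> [z ->]; rewrite denq_int.
Qed.

Lemma isint_int (z : int) : isint z%:~R.
Proof. by apply/isintP; exists z. Qed.

Lemma isintD r s : isint r -> isint s -> isint (r + s).
Proof. by move=> /isintP[a ->] /isintP[b ->]; apply/isintP; exists (a + b); rewrite intrD. Qed.

Lemma isintN r : isint r -> isint (- r).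
Proof. by move=> /isintP[a ->]; apply/isintP; exists (- a); rewrite intrN. Qed.

Lemma isintB r s : isint r -> isint s -> isint (r - s).
Proof. by move=> h1 h2; apply: isintD => //; apply: isintN. Qed.

Lemma isintMz r (z : int) : isint r -> isint (r * z%:~R).
Proof. by move=> /isintP[a ->]; apply/isintP; exists (a * z); rewrite intrM. Qed.

Lemma isint_mulrn r n : isint r -> isint (r *+ n).
Proof. by move=> h; rewrite -mulr_natr -[n%:R]/((n%:Z)%:~R); apply: isintMz. Qed.

Lemma isint0 : isint 0. Proof. exact: (isint_int 0). Qed.

Lemma isint_trans r s t : isint (r - s) -> isint (s - t) -> isint (r - t).
Proof. by move=> h1 h2; have := isintD h1 h2; rewrite addrA subrK. Qed.

Lemma isint_sym r s : isint (r - s) -> isint (s - r).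
Proof. by move=> h; have := isintN h; rewrite opprB. Qed.

Lemma isint_div (z n : int) : n != 0 -> isint (z%:~R / n%:~R) <-> (n %| z)%Z.
Proof.
move=> n0; have n0' : (n%:~R : rat) != 0 by rewrite intr_eq0.
split.
  move=> /isintP[k hk]; apply/dvdzP; exists k.
  apply: (@intr_inj rat); rewrite intrM -hk mulfVK //.
move=> /dvdzP[k ->]; rewrite intrM mulfK //; exact: isint_int.
Qed.

Lemma coprimez_den r : coprimez (denq r) (numq r).
Proof. by rewrite coprimezE coprime_sym coprime_num_den. Qed.

Lemma den_dvd r (K : int) : K != 0 -> isint (r * K%:~R) -> (denq r %| K)%Z.
Proof.
move=> K0 /isintP[k hk].
have hd : (denq r)%:~R != 0 :> rat by rewrite intr_eq0 denq_neq0.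
have : (numq r * K = k * denq r).
  apply: (@intr_inj rat); rewrite !intrM -hk numqE.
  by rewrite mulrAC.
move=> e; have : (denq r %| numq r * K)%Z by rewrite e dvdz_mull.
by rewrite Gauss_dvdzr // coprimez_den.
Qed.



Lemma zhat_dvd c (m n : nat) : is_zhat c -> (0 < m)%N -> (0 < n)%N -> (m %| n)%N ->
  (m%:Z %| c n - c m)%Z.
Proof. by move=> hc m0 n0 mn; rewrite -eqz_mod_dvd; apply: hc. Qed.

Lemma qzA c (z : int) (K : nat) : is_zhat c -> (0 < K)%N ->
  isint (qz_act c (z%:~R / K%:~R) - (z * c K)%:~R / K%:~R).
Proof.
move=> hc K0; set r : rat := z%:~R / K%:~R.
have K0' : (K%:~R : rat) != 0 by rewrite intr_eq0 -lt0n.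
have dK : (denq r %| K%:Z)%Z.
  apply: den_dvd; first by rewrite -lt0n.
  by rewrite /r mulfVK //; exact: isint_int.
have e : (z * c K)%:~R / K%:~R = (numq r * c K)%:~R / (denq r)%:~R :> rat.
  by rewrite !intrM mulrAC [RHS]mulrAC divq_num_den.
rewrite /qz_act e -mulrBl -intrB -mulrBr.
apply/isint_div; first by rewrite denq_neq0.
apply: dvdz_mull; rewrite -[X in (X %| _)%Z]absz_denq.
have := zhat_dvd (c := c) (m := `|denq r|%N) (n := K) hc.
rewrite absz_denq -!eqz_mod_dvd => h; rewrite eq_sym; apply: h => //.
  by rewrite -ltz_nat absz_denq denq_gt0.

Qed.

Lemma qzK c r (K : nat) : is_zhat c -> (0 < K)%N -> isint (r * K%:~R) ->
  isint (qz_act c r - r * (c K)%:~R).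
Proof.
move=> hc K0 /isintP[z hz].
have K0' : (K%:~R : rat) != 0 by rewrite intr_eq0 -lt0n.
have -> : r = z%:~R / K%:~R by rewrite -hz mulfK.
have := qzA z hc K0; congr isint; congr (_ - _).
by rewrite intrM mulrAC.
Qed.

Lemma isint_denK r : isint (r * (`|denq r|%N)%:~R).
Proof. by rewrite absz_denq -numqE; exact: isint_int. Qed.

Lemma den_pos r : (0 < `|denq r|)%N.
Proof. by rewrite -ltz_nat absz_denq denq_gt0. Qed.

Lemma isint_mulK r (K M : nat) : isint (r * K%:~R) -> isint (r * (K * M)%N%:~R).
Proof. by move=> h; rewrite PoszM intrM mulrA; apply: isintMz. Qed.

Lemma isint_mulK' r (K M : nat) : isint (r * K%:~R) -> isint (r * (M * K)%N%:~R).
Proof. by rewrite mulnC; apply: isint_mulK. Qed.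

Lemma qz_add c r s : is_zhat c ->
  isint (qz_act c (r + s) - (qz_act c r + qz_act c s)).
Proof.
move=> hc; set K := (`|denq r| * `|denq s|)%N.
have K0 : (0 < K)%N by rewrite muln_gt0 !den_pos.
have hr : isint (r * K%:~R) by apply: isint_mulK; apply: isint_denK.
have hs : isint (s * K%:~R) by apply: isint_mulK'; apply: isint_denK.
have hrs : isint ((r + s) * K%:~R) by rewrite mulrDl; apply: isintD.
have h1 := qzK hc K0 hrs; have h2 := qzK hc K0 hr; have h3 := qzK hc K0 hs.
have := isintB h1 (isintD h2 h3).
congr isint; rewrite mulrDl; ring.
Qed.

Lemma qz_mulz c r (z : int) : is_zhat c ->
  isint (qz_act c (r * z%:~R) - z%:~R * qz_act c r).
Proof.
move=> hc; set K := `|denq r|%N.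
have K0 : (0 < K)%N by apply: den_pos.
have hr : isint (r * K%:~R) by apply: isint_denK.
have hrz : isint (r * z%:~R * K%:~R) by rewrite mulrAC; apply: isintMz.
have h1 := qzK hc K0 hrz; have h2 := qzK hc K0 hr.
have := isintB h1 (isintMz z h2).
congr isint; ring.
Qed.

Lemma qz0 c : qz_act c 0 = 0.
Proof. by rewrite /qz_act mul0r. Qed.

Section Add.
Variables (L V : zmodType) (P : V -> Prop).
Hypotheses (P0 : P 0) (PD : forall a b, P a -> P b -> P (a + b))
  (PN : forall a, P a -> P (- a)).
Variable g : L -> V.
Hypothesis Hg : forall x y, P (g (x + y) - g x - g y).

Lemma add_g0 : P (g 0).
Proof. by have := PN (Hg 0 0); rewrite addr0 subrr sub0r opprK. Qed.

Lemma add_gN x : P (g (- x) + g x).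
Proof.
have := PD (PN (Hg x (- x))) add_g0; rewrite subrr opprB.
suff -> : g (- x) + g x = g (- x) - (g 0 - g x) + g 0 by [].
by rewrite opprB -addrA subrK.
Qed.

Lemma add_gn x (n : nat) : P (g (x *+ n) - g x *+ n).
Proof.
elim: n => [|n IH]; first by rewrite !mulr0n subr0; exact: add_g0.
have := PD (Hg x (x *+ n)) IH; rewrite -mulrS.
by rewrite -addrA addKr [g x *+ n.+1]mulrS opprD addrA.
Qed.

Lemma add_gz x (z : int) : P (g (x *~ z) - g x *~ z).
Proof.
case: z => n; first by rewrite -!pmulrn; apply: add_gn.
rewrite !NegzE !mulrNz -!pmulrn.
have := PD (add_gN (x *+ n.+1)) (PN (add_gn x n.+1)).
by rewrite opprB [X in _ + X]addrC addrA addrK opprK.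
Qed.
End Add.

Lemma dual_mulz (L : zmodType) (f : L -> rat) : is_dual f ->
  forall x (z : int), isint (f (x *~ z) - z%:~R * f x).
Proof.
move=> hf x z.
rewrite mulrzl; exact: (@add_gz L _ isint isintD isintN f hf x z).
Qed.

Lemma dual_zero (L : zmodType) (f : L -> rat) : is_dual f -> isint (f 0).
Proof.
move=> hf; exact: (@add_g0 L _ isint isintN f hf).
Qed.

Lemma dvdzD' (k a b : int) : (k %| a)%Z -> (k %| b)%Z -> (k %| a + b)%Z.
Proof. by move=> ha hb; rewrite rpredD. Qed.
Lemma dvdzN' (k a : int) : (k %| a)%Z -> (k %| - a)%Z.
Proof. by move=> ha; rewrite rpredN. Qed.

Lemma hom_mulz (L : zmodType) (xi : L -> nat -> int) : is_hom_zhat xi ->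
  forall (k : nat), (0 < k)%N -> forall x (z : int), (k%:Z %| xi (x *~ z) k - z * xi x k)%Z.
Proof.
move=> [_ hadd] k k0 x z.
have Hg : forall a b, (k%:Z %| xi (a + b) k - xi a k - xi b k)%Z.
  move=> a b; have := hadd a b k k0; rewrite eqz_mod_dvd /zhat_add.
  by rewrite opprD addrA.
have := @add_gz L _ _ (@dvdzD' k) (@dvdzN' k) (fun y => xi y k) Hg x z.
by rewrite /= mulrzz mulrC.
Qed.

Lemma hom_zhat_dvd (L : zmodType) (xi : L -> nat -> int) : is_hom_zhat xi ->
  forall x (m n : nat), (0 < m)%N -> (0 < n)%N -> (m %| n)%N ->
  (m%:Z %| xi x n - xi x m)%Z.
Proof. by move=> [hz _] x m n m0 n0 mn; apply: zhat_dvd. Qed.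

Lemma muS_of (L : zmodType) (s : rat) (M : int) : (denq s %| M)%Z ->
  (forall p, prime p -> p_divisible L p -> ~~ (p %| `|M|)%N) -> in_muS L s.
Proof.
move=> dM hM p pp pd; apply/negP => hp.
by move/negP: (hM p pp pd); apply; apply: dvdn_trans hp _; rewrite -dvdzE.
Qed.

Lemma muS_prod (L : zmodType) r s : in_muS L r -> in_muS L s ->
  forall p, prime p -> p_divisible L p -> ~~ (p %| `|(denq r * denq s)%R|)%N.
Proof.
move=> hr hs p pp pd; rewrite abszM Euclid_dvdM // negb_or.
by rewrite hr // hs.
Qed.

Lemma muS_add (L : zmodType) r s : in_muS L r -> in_muS L s -> in_muS L (r + s).
Proof.
move=> hr hs; apply: (muS_of (M := denq r * denq s)); last exact: muS_prod.
apply: den_dvd; first by rewrite mulf_neq0 ?denq_neq0.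
rewrite intrM mulrDl mulrA -numqE mulrCA -numqE.
by apply: isintD; apply: isintMz; apply: isint_int.
Qed.

Lemma muS_mulz (L : zmodType) r (z : int) : in_muS L r -> in_muS L (r * z%:~R).
Proof.
move=> hr; apply: (muS_of (M := denq r)); last exact: hr.
apply: den_dvd; first by rewrite denq_neq0.
by rewrite mulrAC -numqE -intrM; apply: isint_int.
Qed.

Lemma muS_opp (L : zmodType) r : in_muS L r -> in_muS L (- r).
Proof. by move=> h; have := muS_mulz (-1) h; rewrite mulrN1. Qed.

Lemma muS_sub (L : zmodType) r s : in_muS L r -> in_muS L s -> in_muS L (r - s).
Proof. by move=> hr hs; apply: muS_add => //; apply: muS_opp. Qed.

Lemma muS_int (L : zmodType) (z : int) : in_muS L z%:~R.
Proof. by move=> p pp _; rewrite denq_int dvdn1; case: eqP pp => [->|]. Qed.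

Lemma tf_int (L : zmodType) : torsion_free L -> forall (x : L) (z : int),
  z != 0 -> x *~ z = 0 -> x = 0.
Proof.
move=> hTF x z z0 h; apply: (hTF x `|z|%N); first by rewrite absz_gt0.
case: z z0 h => n z0 h; first by rewrite pmulrn.
by move/eqP: h; rewrite NegzE mulrNz oppr_eq0 -pmulrn => /eqP.
Qed.

Section Coord.
Variables (L : zmodType) (hTF : torsion_free L) (hR1 : rank_one L).
Variables (u : L) (hu : u != 0).

Lemma tf_eq (a b : int) : u *~ a = u *~ b -> a = b.
Proof.
move=> h; apply/eqP; rewrite -subr_eq0; case: (eqVneq (a - b) 0) => // hn.
by exfalso; move/eqP: hu; apply; apply: (tf_int hTF hn); rewrite mulrzBr h subrr.
Qed.

Lemma rat_cross (a : rat) (n m : int) : m != 0 -> a = n%:~R / m%:~R ->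
  n * denq a = numq a * m.
Proof.
move=> m0 ha; apply: (@intr_inj rat); rewrite !intrM numqE ha.
have m0' : (m%:~R : rat) != 0 by rewrite intr_eq0.
by rewrite mulrAC mulfVK // mulrC.
Qed.

Lemma cross_rat (a : rat) (n m : int) : m != 0 -> n * denq a = numq a * m ->
  a = n%:~R / m%:~R.
Proof.
move=> m0 h; have m0' : (m%:~R : rat) != 0 by rewrite intr_eq0.
have d0 : ((denq a)%:~R : rat) != 0 by rewrite intr_eq0 denq_neq0.
apply: (mulIf d0); rewrite -numqE mulrAC -intrM h intrM mulfK //.
Qed.

Lemma coord_ex x : exists a : rat, x *~ denq a == u *~ numq a.
Proof.
have [m [n [hmn e]]] := (hR1.2 x u).
have m0 : m != 0.
  apply/negP => /eqP m0; move: e hmn; rewrite m0 mulr0z eqxx /= => e hn.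
  by exfalso; move/eqP: hu; apply; apply: (tf_int hTF hn); rewrite -e.
exists (n%:~R / m%:~R); set a := _ / _; apply/eqP.
have hc := rat_cross m0 (erefl a).
apply/eqP; rewrite -subr_eq0; apply/eqP; apply: (tf_int hTF m0).
by rewrite mulrzBl -!mulrzA [denq a * m]mulrC (mulrzA x) e -!mulrzA hc subrr.
Qed.

Definition psi x : rat := xchoose (coord_ex x).

Lemma psi_spec x : x *~ denq (psi x) = u *~ numq (psi x).
Proof. exact/eqP/(xchooseP (coord_ex x)). Qed.

Lemma psi_uniq x (m n : int) : m != 0 -> x *~ m = u *~ n -> psi x = n%:~R / m%:~R.
Proof.
move=> m0 e; apply: cross_rat => //; apply: tf_eq.
rewrite (mulrzA u) -e -(mulrzA x) (mulrC m) (mulrzA x).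
by have -> := psi_spec x; rewrite -mulrzA.
Qed.

Lemma psi_add x y : psi (x + y) = psi x + psi y.
Proof.
have dx := denq_neq0 (psi x); have dy := denq_neq0 (psi y).
rewrite (@psi_uniq (x + y) (denq (psi x) * denq (psi y))
   (numq (psi x) * denq (psi y) + numq (psi y) * denq (psi x))).
- rewrite -[psi x in RHS]divq_num_den -[psi y in RHS]divq_num_den.
  have dx' : ((denq (psi x))%:~R : rat) != 0 by rewrite intr_eq0.
  have dy' : ((denq (psi y))%:~R : rat) != 0 by rewrite intr_eq0.
  rewrite !intrD !intrM; field.
  by rewrite dx' dy'.
- by rewrite mulf_neq0.
rewrite mulrzDl mulrzDr (mulrzA x) (mulrC (denq (psi x))) (mulrzA y).
by rewrite (psi_spec x) (psi_spec y) -!mulrzA.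
Qed.

Lemma psi_u : psi u = 1.
Proof. by rewrite (@psi_uniq u 1 1) // divr1. Qed.

Lemma psi_coprime (p : nat) : prime p -> (forall y : L, y *+ p != u) ->
  forall x, ~~ (p %| `|denq (psi x)|)%N.
Proof.
move=> pp hp x; apply/negP => hd.
have := coprimez_den (psi x); move/coprimezP => [[al be] /= e].
set d := denq (psi x) in e hd; set n := numq (psi x) in e.
have [d' hd'] : exists d' : nat, `|d|%N = (d' * p)%N by exists (`|d| %/ p)%N; rewrite divnK.
have dd : d = (d' * p)%N%:Z by rewrite -hd' absz_denq.
move/negP: (hp ((u *~ al + x *~ be) *~ d')); apply; apply/eqP.
rewrite pmulrn -mulrzA -PoszM -dd mulrzDl -!mulrzA (mulrC be) (mulrzA x).
rewrite /d psi_spec -mulrzA -mulrzDr (mulrC (numq (psi x))) -/d -/n e.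
by rewrite mulr1z.
Qed.
End Coord.

Section W.
Variable p : nat.
Hypothesis pp : prime p.

Definition Winv (a q : int) : int := (egcdz a q).1.

Lemma Winv_spec (a q : int) : coprimez a q -> (q %| Winv a q * a - 1)%Z.
Proof.
rewrite /Winv; case: egcdzP => u v /= e _ cop.
move: cop; rewrite /coprimez => /eqP cop; move: e; rewrite cop => e.
have -> : u * a - 1 = - (v * q) by rewrite -e; ring.
by rewrite rpredN dvdz_mull.
Qed.

Definition W (m : int) (k : nat) : int :=
  (k`_p^')%N%:Z * Winv (m * (k`_p^')%N%:Z) (k`_p)%N%:Z.

Lemma W1 m k : ((k`_p^')%N%:Z %| W m k)%Z.
Proof. exact: dvdz_mulr. Qed.

Lemma cop_p_part (m : int) k : ~~ (p %| `|m|)%N -> coprimez m (k`_p)%N%:Z.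
Proof.
move=> hm; rewrite coprimezE /= p_part coprime_sym; apply: coprimeXl.
by rewrite prime_coprime.
Qed.

Lemma W2 m k : ~~ (p %| `|m|)%N -> ((k`_p)%N%:Z %| m * W m k - 1)%Z.
Proof.
move=> hm; rewrite /W mulrA [_ * Winv _ _]mulrC; apply: Winv_spec.
rewrite coprimezMl cop_p_part //= coprimezE /= coprime_sym.
exact: coprime_partC.
Qed.

Lemma dvdzB' (k a b : int) : (k %| a)%Z -> (k %| b)%Z -> (k %| a - b)%Z.
Proof. by move=> ha hb; rewrite rpredB. Qed.

Lemma dvdz_split (m : nat) (a : int) : (0 < m)%N ->
  ((m`_p)%N%:Z %| a)%Z -> ((m`_p^')%N%:Z %| a)%Z -> (m%:Z %| a)%Z.
Proof.
move=> m0 h1 h2; rewrite -(partnC p m0) PoszM Gauss_dvdz ?h1 ?h2 //.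
by rewrite coprimezE /=; exact: coprime_partC.
Qed.

Lemma W_compat (d : int) (m n : nat) : ~~ (p %| `|d|)%N -> (0 < m)%N -> (0 < n)%N ->
  (m %| n)%N -> (m%:Z %| W d n - W d m)%Z.
Proof.
move=> hd m0 n0 mn; apply: dvdz_split => //.
  have h : ((m`_p)%N%:Z %| d * (W d n - W d m))%Z.
    have -> : d * (W d n - W d m) = (d * W d n - 1) - (d * W d m - 1) by ring.
    apply: dvdzB'; last exact: W2.
    apply: dvdz_trans (W2 n hd); rewrite dvdzE /=; exact: partn_dvd.
  by move: h; rewrite Gauss_dvdzr // coprimez_sym; apply: cop_p_part.
apply: dvdzB'; last exact: W1.
apply: dvdz_trans (W1 d n); rewrite dvdzE /=; exact: partn_dvd.
Qed.
End W.

Section Eta.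
Variables (L : zmodType) (hTF : torsion_free L) (hR1 : rank_one L).
Variables (u : L) (hu : u != 0) (p : nat) (pp : prime p) (hp : forall y : L, y *+ p != u).

Let ps := psi hTF hR1 hu.

Definition eta (x : L) (k : nat) : int := numq (ps x) * W p (denq (ps x)) k.

Lemma eta_hom : is_hom_zhat eta.
Proof.
have cop := psi_coprime hTF hR1 hu pp hp.
split.
  move=> x m n m0 n0 mn; rewrite eqz_mod_dvd /eta -mulrBr; apply: dvdz_mull.
  exact: W_compat.
move=> x y k k0; rewrite eqz_mod_dvd /zhat_add /eta.
have hadd : ps (x + y) = ps x + ps y by apply: psi_add.
set a := ps x in hadd *; set b := ps y in hadd *; set c := ps (x + y) in hadd *.
have hca := cop x; have hcb := cop y; have hcc := cop (x + y).
rewrite -/a in hca; rewrite -/b in hcb; rewrite -/c in hcc.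
have da := denq_neq0 a; have db := denq_neq0 b.
have cross : (numq a * denq b + numq b * denq a) * denq c = numq c * (denq a * denq b).
  apply: rat_cross; first by rewrite mulf_neq0.
  rewrite hadd -[a in LHS]divq_num_den -[b in LHS]divq_num_den.
  have da' : ((denq a)%:~R : rat) != 0 by rewrite intr_eq0.
  have db' : ((denq b)%:~R : rat) != 0 by rewrite intr_eq0.
  rewrite !intrD !intrM; field.
  by rewrite da' db'.
apply: (dvdz_split (p := p) k0).
  set Wa := W p (denq a) k; set Wb := W p (denq b) k; set Wc := W p (denq c) k.
  have cp : coprimez (k`_p)%N%:Z (denq a * denq b * denq c).
    rewrite !coprimezMr !(coprimez_sym (k`_p)%N%:Z).
    by rewrite !cop_p_part.
  rewrite -(Gauss_dvdzr _ cp).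
  have -> : denq a * denq b * denq c * (numq c * Wc - (numq a * Wa + numq b * Wb)) =
     denq a * denq b * numq c * (denq c * Wc - 1)
     - denq b * denq c * numq a * (denq a * Wa - 1)
     - denq a * denq c * numq b * (denq b * Wb - 1)
     + (denq a * denq b * numq c - (numq a * denq b + numq b * denq a) * denq c).
    ring.
  rewrite cross.
  have -> : denq a * denq b * numq c - numq c * (denq a * denq b) = 0 by ring.
  rewrite addr0; apply: dvdzB'; first apply: dvdzB'.
  - by apply: dvdz_mull; apply: W2.
  - by apply: dvdz_mull; apply: W2.
  - by apply: dvdz_mull; apply: W2.
apply: dvdzB'; first by apply: dvdz_mull; apply: W1.
by apply: dvdzD'; apply: dvdz_mull; apply: W1.
Qed.

Lemma eta_u : eta u p = W p 1 p.
Proof. by rewrite /eta /ps psi_u mul1r. Qed.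

Lemma keyK (xi : L -> nat -> int) : generates_hom xi -> ~~ (p%:Z %| xi u p)%Z.
Proof.
move=> gen; have [c [hc e]] := gen eta eta_hom.
have := e u p (prime_gt0 pp); rewrite eqz_mod_dvd /zhat_mul eta_u => h1.
have h2 := W2 pp p (m := 1); rewrite mul1r in h2.
have pp' : (p`_p)%N = p by rewrite p_part logn_prime // eqxx expn1.
rewrite pp' in h2.
have h2' : (p%:Z %| W p 1 p - 1)%Z.
  by apply: h2; rewrite dvdn1; apply/eqP => p1; move: pp; rewrite p1.
apply/negP => hx.
have h3 : (p%:Z %| W p 1 p)%Z.
  have -> : W p 1 p = (W p 1 p - c p * xi u p) + c p * xi u p by rewrite subrK.
  by apply: dvdzD' => //; apply: dvdz_mull.
have := dvdzB' h3 h2'.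
rewrite opprB addrC subrK dvdz1 /= => /eqP p1.
by move: (prime_gt1 pp); rewrite p1.
Qed.
End Eta.

Section Gen.
Variables (L : zmodType) (xi : L -> nat -> int) (hxi : is_hom_zhat xi).

Lemma xi_dual_is_dual r : is_dual (xi_dual xi r).
Proof.
move=> x y; rewrite /xi_dual /qz_act -!mulrBl -!intrB -!mulrBr.
apply/isint_div; first exact: denq_neq0.
apply: dvdz_mull; have := hxi.2 x y `|denq r|%N (den_pos r).
by rewrite eqz_mod_dvd /zhat_add absz_denq opprD addrA.
Qed.

Lemma xi_dual_tor r : in_tor_dual (xi_dual xi r).
Proof.
split; first exact: xi_dual_is_dual.
exists `|denq r|%N; split; first exact: den_pos.
move=> x; rewrite /xi_dual /qz_act -mulr_natr -[(`|denq r|)%:R]/((`|denq r|%N%:Z)%:~R).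
rewrite absz_denq mulfVK; first exact: isint_int.
by rewrite intr_eq0 denq_neq0.
Qed.

Lemma xi_dual_add r s :
  dual_eq (xi_dual xi (r + s)) (fun x => xi_dual xi r x + xi_dual xi s x).
Proof. by move=> x; apply: qz_add; exact: hxi.1. Qed.

Lemma xi_dual_frac (z : int) (K : nat) x : (0 < K)%N ->
  isint (xi_dual xi (z%:~R / K%:~R) x - (z * xi x K)%:~R / K%:~R).
Proof. by move=> K0; apply: qzA => //; exact: hxi.1. Qed.

End Gen.

Lemma dvdz_natn (m n : nat) (a : int) : (m %| n)%N -> (n%:Z %| a)%Z -> (m%:Z %| a)%Z.
Proof. by move=> mn; apply: dvdz_trans; rewrite dvdzE. Qed.

Lemma isint_div_nat (z : int) (n : nat) : (0 < n)%N ->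
  isint (z%:~R / n%:~R) <-> (n%:Z %| z)%Z.
Proof. by move=> n0; apply: isint_div; rewrite -lt0n. Qed.

Section Dir21.
Variables (L : zmodType) (xi : L -> nat -> int) (hxi : is_hom_zhat xi).

Lemma dir21 : dual_restr_iso xi -> generates_hom xi.
Proof.
case=> _ hadd hinj hsurj eta heta.
have ex : forall n : nat, exists z : int, (0 < n)%N ->
    in_muS L (z%:~R / n%:~R) /\
    dual_eq (xi_dual eta ((1:int)%:~R / n%:~R)) (xi_dual xi (z%:~R / n%:~R)).
  move=> n; case: (posnP n) => [->|n0]; first by exists 0.
  have n0' : (n%:~R : rat) != 0 by rewrite intr_eq0 -lt0n.
  have [r [hr hf]] := hsurj _ (xi_dual_tor heta ((1:int)%:~R / n%:~R)).
  have hrn : isint (r * n%:~R).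
    have := hinj (r * n%:~R) 0 (muS_mulz _ hr) (muS_int (L := L) 0).
    rewrite subr0; apply => x; rewrite /xi_dual qz0 subr0.
    have h1 := @qz_mulz (xi x) r n (hxi.1 x).
    have h2 := isintMz n (isint_sym (hf x)); rewrite mulrBl in h2.
    have h3 := isintMz n (xi_dual_frac heta 1 x n0); rewrite mulrBl mulfVK // in h3.
    have h4 := isintD h3 (isint_int (1 * eta x n)); rewrite subrK in h4.
    have := isintD h1 (isintD h2 h4); rewrite /xi_dual; congr isint; ring.
  have [z hz] := (isintP _).1 hrn.
  exists z => _; have -> : z%:~R / n%:~R = r by rewrite -hz mulfK.
  by split.
pose c := fun n => proj1_sig (constructive_indefinite_description _ (ex n)).
have hc : forall n, (0 < n)%N -> in_muS L ((c n)%:~R / n%:~R) /\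
    dual_eq (xi_dual eta ((1:int)%:~R / n%:~R)) (xi_dual xi ((c n)%:~R / n%:~R)).
  by move=> n; rewrite /c; case: constructive_indefinite_description.
have P1 : forall x n, (0 < n)%N -> (n%:Z %| eta x n - c n * xi x n)%Z.
  move=> x n n0; have [_ hd] := hc n n0.
  have h1 := xi_dual_frac heta 1 x n0.
  have h2 := xi_dual_frac hxi (c n) x n0.
  have := isint_trans (isint_sym h1) (isint_trans (hd x) h2).
  by rewrite mul1r -mulrBl -intrB => /(isint_div_nat _ n0).
exists c; split; last first.
  by move=> x n n0; rewrite eqz_mod_dvd /zhat_mul; apply: P1.
move=> m n m0 n0 mn; rewrite eqz_mod_dvd.
have m0' : (m%:~R : rat) != 0 by rewrite intr_eq0 -lt0n.
have n0' : (n%:~R : rat) != 0 by rewrite intr_eq0 -lt0n.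
have [k hk] : exists k, n = (k * m)%N by exists (n %/ m)%N; rewrite divnK.
have hr : in_muS L ((c n)%:~R / m%:~R).
  have -> : (c n)%:~R / m%:~R = (c n)%:~R / n%:~R * (k%:Z)%:~R :> rat.
    have nkm : (n%:~R : rat) = (k%:Z)%:~R * m%:~R by rewrite hk PoszM intrM.
    have k0 : ((k%:Z)%:~R : rat) != 0.
      by move: n0'; rewrite nkm mulf_eq0 negb_or => /andP[].
    by rewrite nkm; field; rewrite k0 m0'.
  by apply: muS_mulz; case: (hc n n0).
have hs : in_muS L ((c m)%:~R / m%:~R) by case: (hc m m0).
have := hinj _ _ hr hs.
rewrite -mulrBl -intrB => h; apply/(isint_div_nat _ m0); apply: h => x.
have h1 := xi_dual_frac hxi (c n) x m0.
have h2 := xi_dual_frac hxi (c m) x m0.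
apply: isint_trans h1 _; apply: isint_trans (isint_sym h2).
rewrite -mulrBl -intrB; apply/(isint_div_nat _ m0).
have -> : c n * xi x m - c m * xi x m =
  - (eta x n - c n * xi x n) + (eta x n - eta x m) + (eta x m - c m * xi x m)
  - c n * (xi x n - xi x m) by ring.
apply: dvdzB'; last by apply: dvdz_mull; apply: hom_zhat_dvd.
apply: dvdzD'; last exact: P1.
apply: dvdzD'; last exact: hom_zhat_dvd.
by apply: dvdzN'; apply: (dvdz_natn mn); apply: P1.
Qed.
End Dir21.

Lemma nondiv_elt (L : zmodType) p : ~ p_divisible L p -> exists u : L, forall y, y *+ p != u.
Proof.
move=> h; apply: NNPP => hn; apply: h => x; apply: NNPP => hx; apply: hn.
exists x => y; apply/eqP => e; apply: hx; by exists y.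
Qed.

Lemma nondiv_neq0 (L : zmodType) p (u : L) : (forall y, y *+ p != u) -> u != 0.
Proof. by move=> h; apply/eqP => u0; move: (h 0); rewrite mul0rn u0 eqxx. Qed.

Lemma mulrn_intr (r : rat) (n : nat) : r *+ n = r * (n%:Z)%:~R.
Proof. by rewrite -mulr_natr. Qed.

Lemma is_dual_scale (L : zmodType) (f : L -> rat) (z : int) : is_dual f ->
  is_dual (fun x => f x * z%:~R).
Proof. by move=> hf x y; rewrite -!mulrBl; apply: isintMz. Qed.

Section Dir12.
Variables (L : zmodType) (hTF : torsion_free L) (hR1 : rank_one L).
Variables (xi : L -> nat -> int) (hxi : is_hom_zhat xi) (gen : generates_hom xi).

Lemma inj12 r s : in_muS L r -> in_muS L s -> dual_eq (xi_dual xi r) (xi_dual xi s) ->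
  isint (r - s).
Proof.
move=> hr hs he; set t := r - s; have ht : in_muS L t by apply: muS_sub.
have hz : forall x, isint (qz_act (xi x) t).
  move=> x; have h1 := xi_dual_add hxi t s x; rewrite /t subrK in h1.
  have := isintB (he x) h1; rewrite /xi_dual; congr isint; ring.
rewrite /isint; case: (eqVneq (denq t) 1) => // d1; exfalso.
set d := denq t in d1.
have dd : d = (`|d|%N)%:Z by rewrite /d absz_denq.
have d1' : (1 < `|d|)%N.
  by rewrite ltn_neqAle eq_sym den_pos andbT; apply: contra d1 => /eqP h;
     rewrite dd h.
have pp := pdiv_prime d1'; set p := pdiv `|d| in pp.
have pd : (p %| `|d|)%N by apply: pdiv_dvd.
have npd : ~ p_divisible L p by move=> h; move/negP: (ht p pp h).
have [u hu] := nondiv_elt npd; have u0 := nondiv_neq0 hu.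
have K := keyK hTF hR1 u0 pp hu gen.
have := hz u; rewrite /qz_act => /isint_div; rewrite denq_neq0 => /(_ isT).
rewrite Gauss_dvdzr; last by rewrite coprimez_den.
rewrite -/d {1}dd => h.
have h2 : (p%:Z %| xi u `|d|)%Z by apply: dvdz_natn h.
have h3 := hom_zhat_dvd hxi u (prime_gt0 pp) (den_pos t) pd.
move/negP: K; apply; have -> : xi u p = xi u `|d| - (xi u `|d| - xi u p) by ring.
exact: dvdzB'.
Qed.
End Dir12.

Section SP.
Variables (L : zmodType) (hTF : torsion_free L) (hR1 : rank_one L).
Variables (xi : L -> nat -> int) (hxi : is_hom_zhat xi) (gen : generates_hom xi).

Lemma single_prime (p a : nat) (f : L -> rat) : prime p -> ~ p_divisible L p ->
  is_dual f -> (forall x, isint (f x *+ (p ^ a))) ->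
  exists r, in_muS L r /\ dual_eq f (xi_dual xi r).
Proof.
move=> pp npd hf hfq; set q := (p ^ a)%N in hfq.
have q0 : (0 < q)%N by rewrite expn_gt0 prime_gt0.
have q0' : ((q%:Z)%:~R : rat) != 0 by rewrite intr_eq0 -lt0n.
have [u hu] := nondiv_elt npd; have u0 := nondiv_neq0 hu.
have K := keyK hTF hR1 u0 pp hu gen.
set X := xi u q.
have cX : coprimez X q%:Z.
  case: (posnP a) => [a0|apos].
    by rewrite /q a0 expn0 coprimezE /= coprimen1.
  rewrite coprimezE /= /q; apply: coprimeXr; rewrite coprime_sym prime_coprime //.
  apply/negP => hX; move/negP: K; apply.
  have h1 := hom_zhat_dvd hxi u (prime_gt0 pp) q0 (dvdn_exp apos (dvdnn p)).
  have hX' : (p%:Z %| X)%Z by rewrite dvdzE.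
  have -> : xi u p = X - (xi u q - xi u p) by rewrite /X; ring.
  exact: dvdzB'.
have [[s0 t0] /= e] := coprimezP _ _ cX.
have [b hb] := (isintP _).1 (hfq u); rewrite mulrn_intr in hb.
have fuE : f u = b%:~R / (q%:Z)%:~R by rewrite -hb mulfK.
exists ((b * s0)%:~R / (q%:Z)%:~R); split.
  apply: (muS_of (M := q%:Z)).
    apply: den_dvd; first by rewrite -lt0n.
    by rewrite mulfVK //; apply: isint_int.
  move=> p' pp' pd'; apply/negP => h; move: h; rewrite /= /q Euclid_dvdX //.
  case/andP => h _; move: h; rewrite dvdn_prime2 // => /eqP e'.
  by apply: npd; rewrite -e'.
move=> x.
have sx := psi_spec hTF hR1 u0 x.
have cd := psi_coprime hTF hR1 u0 pp hu x.
set d := denq _ in sx cd; set n := numq _ in sx.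
have [Fx hFx] := (isintP _).1 (hfq x); rewrite mulrn_intr in hFx.
have fxE : f x = Fx%:~R / (q%:Z)%:~R by rewrite -hFx mulfK.
have hfr := xi_dual_frac hxi (b * s0) x q0.
apply: isint_trans (isint_sym hfr).
rewrite fxE -mulrBl -intrB; apply/(isint_div_nat _ q0).
have cqd : coprimez q%:Z d.
  rewrite coprimezE /= coprime_sym /q; apply: coprimeXr.
  by rewrite coprime_sym prime_coprime.
rewrite -(Gauss_dvdzr _ cqd).
have hi : (q%:Z %| d * Fx - n * b)%Z.
  have h1 := dual_mulz hf x d; have h2 := dual_mulz hf u n.
  rewrite sx in h1; have := isintB h2 h1.
  rewrite fxE fuE => h3; apply/(isint_div_nat _ q0); move: h3; congr isint.
  rewrite !intrB !intrM; field; by rewrite q0'.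
have hii : (q%:Z %| d * xi x q - n * X)%Z.
  have h1 := hom_mulz hxi q0 x d; have h2 := hom_mulz hxi q0 u n.
  rewrite sx in h1.
  have -> : d * xi x q - n * X = (xi (u *~ n) q - n * xi u q) - (xi (u *~ n) q - d * xi x q)
    by rewrite /X; ring.
  exact: dvdzB'.
have -> : d * (Fx - b * s0 * xi x q) = (d * Fx - n * b) - b * s0 * (d * xi x q - n * X)
   + n * b * t0 * q%:Z + n * b * (1 - (s0 * X + t0 * q%:Z)) by ring.
rewrite e subrr mulr0 addr0.
apply: dvdzD'; last by apply: dvdz_mull; apply: dvdzz.
apply: dvdzB' => //; exact: dvdz_mull.
Qed.
End SP.

Section Surj.
Variables (L : zmodType) (hTF : torsion_free L) (hR1 : rank_one L).
Variables (xi : L -> nat -> int) (hxi : is_hom_zhat xi) (gen : generates_hom xi).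

Lemma surj12 (N : nat) : forall f : L -> rat, (0 < N)%N -> is_dual f ->
  (forall x, isint (f x *+ N)) -> exists r, in_muS L r /\ dual_eq f (xi_dual xi r).
Proof.
elim/ltn_ind: N => N IH f N0 hf hN.
case: (ltngtP N 1) => [|N1|N1]; first by rewrite ltnS leqn0 => /eqP N00; rewrite N00 in N0.
  have pp := pdiv_prime N1; set p := pdiv N in pp.
  have pN : (p %| N)%N by apply: pdiv_dvd.
  case: (classic (p_divisible L p)) => pd.
    have p0 := prime_gt0 pp.
    have Np : (N %/ p < N)%N by rewrite ltn_Pdiv ?prime_gt1.
    apply: (IH _ Np) => //; first by rewrite divn_gt0 // dvdn_leq.
    move=> x; have [y <-] := pd x.
    have h1 := dual_mulz hf y p; rewrite -pmulrn in h1.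
    have h2 := isintMz (N %/ p)%N%:Z h1.
    have h3 : isint (f y * (N%:Z)%:~R) by rewrite -mulrn_intr.
    rewrite mulrn_intr; have := isintD h2 h3; congr isint.
    have -> : (N%:Z)%:~R = (p%:Z)%:~R * ((N %/ p)%N%:Z)%:~R :> rat.
      by rewrite -intrM -PoszM mulnC divnK.
    ring.
  set q := (N`_p)%N; set N' := (N`_p^')%N.
  have NqN : (q * N')%N = N by rewrite /q /N' partnC.
  have q1 : (1 < q)%N by rewrite /q p_part_gt1 mem_primes pp N0 pN.
  have N'0 : (0 < N')%N by rewrite /N' part_gt0.
  have N'N : (N' < N)%N by rewrite -NqN ltn_Pmull.
  have cqN : coprimez q%:Z N'%:Z by rewrite coprimezE /=; exact: coprime_partC.
  have [[al be] /= e] := coprimezP _ _ cqN.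
  pose f1 := fun x => f x * (be * N'%:Z)%:~R.
  pose f2 := fun x => f x * (al * q%:Z)%:~R.
  have [r1 [hr1 e1]] : exists r, in_muS L r /\ dual_eq f1 (xi_dual xi r).
    apply: (single_prime hTF hR1 hxi gen (a := logn p N) pp pd).
      exact: is_dual_scale.
    move=> x; rewrite -p_part -/q mulrn_intr /f1.
    have -> : f x * (be * N'%:Z)%:~R * (q%:Z)%:~R = f x * (N%:Z)%:~R * be%:~R.
      by rewrite -NqN PoszM !intrM; ring.
    by apply: isintMz; rewrite -mulrn_intr.
  have [r2 [hr2 e2]] : exists r, in_muS L r /\ dual_eq f2 (xi_dual xi r).
    apply: (IH _ N'N f2 N'0); first exact: is_dual_scale.
    move=> x; rewrite mulrn_intr /f2.
    have -> : f x * (al * q%:Z)%:~R * (N'%:Z)%:~R = f x * (N%:Z)%:~R * al%:~R.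
      by rewrite -NqN PoszM !intrM; ring.
    by apply: isintMz; rewrite -mulrn_intr.
  exists (r1 + r2); split; first exact: muS_add.
  move=> x; have h := xi_dual_add hxi r1 r2 x.
  have := isintB (isintD (e1 x) (e2 x)) h.
  have ef : f x = f1 x + f2 x.
    rewrite /f1 /f2 -mulrDr -intrD addrC e mulr1 //.
  rewrite ef; congr isint; ring.
exists 0; split; first by have := muS_int (L := L) 0; rewrite mulr0z.
move=> x; rewrite /xi_dual qz0 subr0; have := hN x; by rewrite N1 mulr1n.
Qed.
End Surj.

Unset Implicit Arguments.
Theorem proposition8p9 (L : zmodType) (hTF : torsion_free L) (hR1 : rank_one L)
  (xi : L -> nat -> int) (hxi : is_hom_zhat xi) :
  generates_hom xi <-> dual_restr_iso xi.
Proof.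
split; last exact: dir21.
move=> gen; split.
- by move=> r _; apply: xi_dual_tor.
- by move=> r s _ _; apply: xi_dual_add.
- exact: inj12.
- move=> f [hf [N [N0 hN]]]; exact: (surj12 hTF hR1 hxi gen N0 hf hN).
Qed.
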